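(* Let $\mathcal{A}$ be an almost disjoint family of infinite subsets of $\mathbb{N}$ which is closed as a subset of $2^{\mathbb{N}}$, and let $\mathcal{I}(\mathcal{A})$ be the ideal generated by $\mathcal{A}$ (together with the finite sets). Then $\mathcal{I}(\mathcal{A})$ is uniformly selective.
   Context: A family of infinite subsets of $\mathbb{N}$ is almost disjoint if any two distinct members have finite intersection. $\mathcal{I}(\mathcal{A})$ consists of the sets $x\subseteq\mathbb{N}$ such that $x\setminus(a_1\cup\dots\cup a_k)$ is finite for some $a_1,\dots,a_k\in\mathcal{A}$. For $x\subseteq\mathbb{N}$, $x/n=\{m\in x:m>n\}$. An ideal $\mathcal{I}$ is uniformly selective if there is a Borel function $H:(2^{\mathbb{N}})^{\mathbb{N}}\to2^{\mathbb{N}}$ such that for every $\subseteq$-decreasing sequence $(x_n)_n$ of sets not in $\mathcal{I}$, $x=H((x_n)_n)\notin\mathcal{I}$ and $x/n\subseteq x_n$ for all $n\in x$. *)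

(* Defs.v *)
From Stdlib Require Import List Bool.
Import ListNotations.

(** Subsets of N as points of the Cantor space 2^N. *)
Definition cantor := nat -> bool.

Definition finite_set (x : cantor) : Prop :=
  exists N, forall m, x m = true -> m < N.
Definition infinite_set (x : cantor) : Prop := ~ finite_set x.

Definition open_cantor (U : cantor -> Prop) : Prop :=
  forall x, U x -> exists n, forall y, (forall i, i < n -> y i = x i) -> U y.
Definition closed_cantor (A : cantor -> Prop) : Prop :=
  open_cantor (fun x => ~ A x).

Definition open_seq (U : (nat -> cantor) -> Prop) : Prop :=
  forall s, U s -> exists n, forall t,
      (forall i j, i < n -> j < n -> t i j = s i j) -> U t.

(** Borel sets of a space with a given family of open sets: the
    sigma-algebra generated by the open sets (closure under extensional
    equality of predicates is included for robustness). *)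
Inductive Borel {X : Type} (op : (X -> Prop) -> Prop) : (X -> Prop) -> Prop :=
| Borel_open : forall U, op U -> Borel op U
| Borel_compl : forall A, Borel op A -> Borel op (fun x => ~ A x)
| Borel_union : forall A : nat -> X -> Prop,
    (forall n, Borel op (A n)) -> Borel op (fun x => exists n, A n x)
| Borel_ext : forall A B, Borel op A -> (forall x, A x <-> B x) -> Borel op B.

Definition Borel_function (H : (nat -> cantor) -> cantor) : Prop :=
  forall U, open_cantor U -> Borel open_seq (fun s => U (H s)).

Definition almost_disjoint (A : cantor -> Prop) : Prop :=
  (forall a, A a -> infinite_set a) /\
  (forall a b, A a -> A b -> a <> b ->
     finite_set (fun m => a m && b m)).

Definition union_list (l : list cantor) : cantor :=
  fun m => existsb (fun a => a m) l.

(** The ideal I(A): x \ (a_1 u ... u a_k) is finite for some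
    a_1,...,a_k in A (k = 0 allowed, giving the finite sets). *)
Definition ideal_gen (A : cantor -> Prop) (x : cantor) : Prop :=
  exists l : list cantor, (forall a, In a l -> A a) /\
    finite_set (fun m => x m && negb (union_list l m)).

Definition uniformly_selective (I : cantor -> Prop) : Prop :=
  exists H : (nat -> cantor) -> cantor, Borel_function H /\
    forall xs : nat -> cantor,
      (forall n m, xs (S n) m = true -> xs n m = true) ->
      (forall n, ~ I (xs n)) ->
      ~ I (H xs) /\
      (forall n, H xs n = true ->
         forall m, n < m -> H xs m = true -> xs n m = true).

(* Main.v *)
Require Import Defs.
From Stdlib Require Import List Bool Arith Lia Classical ClassicalEpsilon.
From Stdlib Require Cantor FinFun.
Import ListNotations.

Notation BS := (Borel open_seq).

Lemma B_empty : BS (fun _ => False).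
Proof. apply Borel_open. intros s []. Qed.

Lemma B_full : BS (fun _ => True).
Proof. apply Borel_open. intros s _. exists 0. auto. Qed.

Lemma B_const (P : Prop) : BS (fun _ => P).
Proof.
  destruct (classic P) as [HP|HP].
  - apply (Borel_ext _ _ _ B_full). intros; tauto.
  - apply (Borel_ext _ _ _ B_empty). intros; tauto.
Qed.

Lemma B_or (S T : (nat -> cantor) -> Prop) : BS S -> BS T -> BS (fun s => S s \/ T s).
Proof.
  intros HS HT.
  apply (Borel_ext _ (fun s => exists n, (match n with 0 => S | _ => T end) s)).
  - apply Borel_union. intros [|n]; auto.
  - intros s; split.
    + intros [[|n] H]; auto.
    + intros [H|H]; [exists 0|exists 1]; auto.
Qed.

Lemma B_not (S : (nat -> cantor) -> Prop) : BS S -> BS (fun s => ~ S s).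
Proof. intros; apply Borel_compl; auto. Qed.

Lemma B_and (S T : (nat -> cantor) -> Prop) : BS S -> BS T -> BS (fun s => S s /\ T s).
Proof.
  intros HS HT.
  apply (Borel_ext _ (fun s => ~ (~ S s \/ ~ T s))).
  - apply B_not, B_or; apply B_not; auto.
  - intros s; split.
    + intros H. split; apply NNPP; tauto.
    + tauto.
Qed.

Lemma B_ex (S : nat -> (nat -> cantor) -> Prop) : (forall n, BS (S n)) -> BS (fun s => exists n, S n s).
Proof. intros; apply Borel_union; auto. Qed.

Lemma B_all (S : nat -> (nat -> cantor) -> Prop) : (forall n, BS (S n)) -> BS (fun s => forall n, S n s).
Proof.
  intros H.
  apply (Borel_ext _ (fun s => ~ exists n, ~ S n s)).
  - apply B_not, B_ex. intros; apply B_not; auto.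
  - intros s; split.
    + intros H1 n. apply NNPP. intros H2; apply H1; eauto.
    + intros H1 [n H2]; auto.
Qed.

Lemma B_coord i m : BS (fun s => s i m = true).
Proof.
  apply Borel_open. intros s Hs. exists (S (Nat.max i m)). intros t Ht.
  rewrite Ht; auto; lia.
Qed.

Lemma B_coordf i m : BS (fun s => s i m = false).
Proof.
  apply (Borel_ext _ _ _ (B_not _ (B_coord i m))).
  intros s; destruct (s i m); split; congruence.
Qed.

Definition upd (y : cantor) (n : nat) (b : bool) : cantor :=
  fun i => if Nat.eqb i n then b else y i.

Lemma fin_dep (H : (nat -> cantor) -> cantor)
  (HB : forall i, BS (fun s => H s i = true)) :
  forall n (Phi : cantor -> Prop),
  (forall y z, (forall i, i < n -> y i = z i) -> Phi y -> Phi z) ->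
  BS (fun s => Phi (H s)).
Proof.
  induction n as [|n IH]; intros Phi HPhi.
  - apply (Borel_ext _ _ _ (B_const (Phi (fun _ => false)))).
    intros s; split; apply HPhi; intros; lia.
  - assert (E : forall y, Phi y <-> (y n = true /\ Phi (upd y n true)) \/
                                  (y n = false /\ Phi (upd y n false))).
    { intros y. assert (Hu : forall b, y n = b -> forall i, i < S n -> y i = upd y n b i).
      { intros b Hb i Hi. unfold upd. destruct (Nat.eqb_spec i n); subst; auto. }
      split.
      - intros Hy. destruct (y n) eqn:E; [left|right]; split; auto;
          apply (HPhi y); auto; apply Hu; auto.
      - intros [[E1 E2]|[E1 E2]]; refine (HPhi _ y _ E2); intros i Hi; symmetry; apply Hu; auto. }
    assert (Hb : forall b, BS (fun s => Phi (upd (H s) n b))).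
    { intros b. apply (IH (fun y => Phi (upd y n b))).
      intros y z Hyz. apply HPhi. intros i Hi. unfold upd.
      destruct (Nat.eqb_spec i n); auto. apply Hyz; lia. }
    apply (Borel_ext _ (fun s => (H s n = true /\ Phi (upd (H s) n true)) \/
                                  (H s n = false /\ Phi (upd (H s) n false)))).
    + apply B_or; apply B_and; auto.
      apply (Borel_ext _ _ _ (B_not _ (HB n))). intros s; destruct (H s n); split; congruence.
    + intros s; symmetry; exact (E (H s)).
Qed.

Lemma borel_fun_of_bits (H : (nat -> cantor) -> cantor)
  (HB : forall i, BS (fun s => H s i = true)) : Borel_function H.
Proof.
  intros U HU.
  apply (Borel_ext _ (fun s => exists n, (fun y => forall z, (forall i, i < n -> z i = y i) -> U z) (H s))).
  - apply B_ex. intros n.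
    apply (fin_dep H HB n (fun y => forall z, (forall i, i < n -> z i = y i) -> U z)).
    intros y z Hyz Hy w Hw. apply Hy. intros i Hi. rewrite Hw by auto. symmetry; auto.
  - intros s; split.
    + intros [n Hn]. apply Hn; auto.
    + intros Hs. destruct (HU _ Hs) as [n Hn]. exists n. intros z Hz. apply Hn. auto.
Qed.
Fixpoint valid (xs : nat -> cantor) (k : nat) (t : list nat) : bool :=
  match t with [] => true | a :: r => Nat.ltb k a && xs k a && valid xs a r end.

Definition NotCov (A : cantor -> Prop) (j : nat) (t : list nat) : Prop :=
  forall G : nat -> cantor, (forall i, i < j -> A (G i)) ->
    exists m, In m t /\ forall i, i < j -> G i m = false.

Definition Req A j t := t <> [] /\ NotCov A j t.

Fixpoint decf (n e : nat) : list nat :=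
  match n with 0 => [] | S n' =>
    match e with 0 => [] | S e' => fst (Cantor.of_nat e') :: decf n' (snd (Cantor.of_nat e')) end end.
Definition dec e := decf e e.
Fixpoint enc (t : list nat) : nat :=
  match t with [] => 0 | a :: r => S (Cantor.to_nat (a, enc r)) end.

Lemma decf_SS n e : decf (S n) (S e) = fst (Cantor.of_nat e) :: decf n (snd (Cantor.of_nat e)).
Proof. reflexivity. Qed.
Lemma enc_cons a t : enc (a :: t) = S (Cantor.to_nat (a, enc t)).
Proof. reflexivity. Qed.

Lemma decf_enc : forall t n, enc t <= n -> decf n (enc t) = t.
Proof.
  induction t as [|a t IH]; intros n Hn.
  - destruct n; reflexivity.
  - rewrite enc_cons in *. destruct n as [|n]; [lia|].
    rewrite decf_SS, Cantor.cancel_of_to. simpl fst; simpl snd. f_equal. apply IH.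
    pose proof (Cantor.to_nat_non_decreasing a (enc t)). lia.
Qed.

Lemma dec_enc t : dec (enc t) = t.
Proof. apply decf_enc; auto. Qed.

Definition bP (P : Prop) : bool := if excluded_middle_informative P then true else false.
Lemma bP_true (P : Prop) : bP P = true <-> P.
Proof. unfold bP; destruct (excluded_middle_informative P); split; auto; congruence. Qed.

Definition Pb A xs j k e : bool := valid xs k (dec e) && bP (Req A j (dec e)).
Definition LP A xs j k e : Prop := Pb A xs j k e = true /\ forall e', e' < e -> Pb A xs j k e' = false.

Definition next A xs j k : nat :=
  if excluded_middle_informative (exists e, LP A xs j k e)
  then epsilon (inhabits 0) (LP A xs j k) else 0.

Lemma LP_unique A xs j k e1 e2 : LP A xs j k e1 -> LP A xs j k e2 -> e1 = e2.
Proof.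
  intros [H1 H1'] [H2 H2']. destruct (Nat.lt_trichotomy e1 e2) as [h|[h|h]]; auto.
  - rewrite H2' in H1; auto; discriminate.
  - rewrite H1' in H2; auto; discriminate.
Qed.

Lemma LP_exists A xs j k : (exists e, Pb A xs j k e = true) -> exists e, LP A xs j k e.
Proof.
  intros [e He]. revert He. induction e as [e IH] using lt_wf_ind. intros He.
  destruct (classic (exists e', e' < e /\ Pb A xs j k e' = true)) as [[e' [h1 h2]]|h].
  - apply (IH e'); auto.
  - exists e. split; auto. intros e' h'. destruct (Pb A xs j k e') eqn:E; auto.
    exfalso; apply h; eauto.
Qed.

Lemma next_spec A xs j k : (exists e, Pb A xs j k e = true) -> LP A xs j k (next A xs j k).
Proof.
  intros H. apply LP_exists in H. unfold next.
  destruct (excluded_middle_informative _) as [h|h]; [|contradiction].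
  apply epsilon_spec; auto.
Qed.

Lemma next_fiber A xs j k e : next A xs j k = e <->
  LP A xs j k e \/ (~ (exists e, LP A xs j k e) /\ e = 0).
Proof.
  unfold next. destruct (excluded_middle_informative _) as [h|h].
  - pose proof (epsilon_spec (inhabits 0) _ h) as hs. split.
    + intros <-. left; auto.
    + intros [h1|[h1 _]]; [|contradiction]. apply (LP_unique _ _ _ _ _ _ hs h1).
  - split; [intros <-; right; auto|]. intros [h1|[_ h1]]; auto. exfalso; eauto.
Qed.

Fixpoint st A xs j : nat :=
  match j with 0 => 0 | S j' => last (dec (next A xs j' (st A xs j'))) (st A xs j') end.
Definition blk A xs j := dec (next A xs j (st A xs j)).
Definition Hf A (xs : nat -> cantor) : cantor := fun m => bP (exists j, In m (blk A xs j)).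

Definition Bfib (f : (nat -> cantor) -> nat) := forall v, BS (fun s => f s = v).

Lemma B_valid k t : BS (fun s => valid s k t = true).
Proof.
  revert k; induction t as [|a t IH]; intros k; simpl.
  - apply (Borel_ext _ _ _ B_full). intuition.
  - apply (Borel_ext _ (fun s => (k < a /\ s k a = true) /\ valid s a t = true)).
    + apply B_and; auto. apply B_and; auto using B_const, B_coord.
    + intros s. rewrite !andb_true_iff, Nat.ltb_lt. tauto.
Qed.

Lemma B_Pb A j k e : BS (fun s => Pb A s j k e = true).
Proof.
  unfold Pb.
  apply (Borel_ext _ (fun s => valid s k (dec e) = true /\ Req A j (dec e))).
  - apply B_and; auto using B_valid, B_const.
  - intros s; rewrite andb_true_iff, bP_true. tauto.
Qed.

Lemma B_LP A j k e : BS (fun s => LP A s j k e).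
Proof.
  unfold LP. apply B_and; [apply B_Pb|].
  apply B_all. intros e'.
  apply (Borel_ext _ (fun s => ~ e' < e \/ ~ Pb A s j k e' = true)).
  - apply B_or; [apply B_const| apply B_not, B_Pb].
  - intros s; split.
    + intros [h|h] h'; [lia|]. destruct (Pb A s j k e'); auto; congruence.
    + intros h. destruct (classic (e' < e)); [right|left; auto].
      rewrite h; auto; congruence.
Qed.

Lemma B_next A j k : Bfib (fun s => next A s j k).
Proof.
  intros v. apply (Borel_ext _ _ _ (B_or _ _ (B_LP A j k v)
     (B_and _ _ (B_not _ (B_ex _ (fun e => B_LP A j k e))) (B_const (v = 0))))).
  intros s; rewrite next_fiber; tauto.
Qed.

Lemma Bfib_comp2 (f : (nat -> cantor) -> nat) (g : (nat -> cantor) -> nat -> nat) :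
  Bfib f -> (forall k, Bfib (fun s => g s k)) -> Bfib (fun s => g s (f s)).
Proof.
  intros Hf Hg v.
  apply (Borel_ext _ (fun s => exists k, f s = k /\ g s k = v)).
  - apply B_ex; intros k; apply B_and; [apply Hf|apply (Hg k)].
  - intros s; split; [intros [k [<- h]]; auto| intros h; eauto].
Qed.

Lemma Bprop_comp (f : (nat -> cantor) -> nat) (Q : (nat -> cantor) -> nat -> Prop) :
  Bfib f -> (forall k, BS (fun s => Q s k)) -> BS (fun s => Q s (f s)).
Proof.
  intros Hf HQ.
  apply (Borel_ext _ (fun s => exists k, f s = k /\ Q s k)).
  - apply B_ex; intros k; apply B_and; [apply Hf|apply (HQ k)].
  - intros s; split; [intros [k [<- h]]; auto| intros h; eauto].
Qed.

Lemma Bfib_map (f : (nat -> cantor) -> nat) (phi : nat -> nat) :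
  Bfib f -> Bfib (fun s => phi (f s)).
Proof.
  intros Hf v. apply (Bprop_comp f (fun _ e => phi e = v) Hf). intros; apply B_const.
Qed.

Lemma B_st A j : Bfib (fun s => st A s j).
Proof.
  induction j as [|j IH]; simpl.
  - intros v; apply B_const.
  - apply (Bfib_comp2 (fun s => st A s j) (fun s k => last (dec (next A s j k)) k) IH).
    intros k. apply (Bfib_map (fun s => next A s j k) (fun e => last (dec e) k)).
    apply B_next.
Qed.

Lemma B_Hf A m : BS (fun s => Hf A s m = true).
Proof.
  apply (Borel_ext _ (fun s => exists j, In m (blk A s j))).
  - apply B_ex. intros j. unfold blk.
    apply (Bprop_comp (fun s => st A s j) (fun s k => In m (dec (next A s j k)))).
    + apply B_st.
    + intros k. apply (Bprop_comp (fun s => next A s j k) (fun _ e => In m (dec e))).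
      * apply B_next.
      * intros; apply B_const.
  - intros s. unfold Hf. rewrite bP_true. tauto.
Qed.

Lemma Hf_borel A : Borel_function (Hf A).
Proof. apply borel_fun_of_bits. apply B_Hf. Qed.
Lemma finite_sub (x y : cantor) : finite_set y -> (forall m, x m = true -> y m = true) -> finite_set x.
Proof. intros [N HN] H. exists N. intros m hm. apply HN, H, hm. Qed.

Lemma finite_or x y : finite_set x -> finite_set y -> finite_set (fun m => x m || y m).
Proof.
  intros [N1 H1] [N2 H2]. exists (N1 + N2). intros m hm.
  apply orb_true_iff in hm. destruct hm as [h|h]; [apply H1 in h|apply H2 in h]; lia.
Qed.

Lemma union_cons a l m : union_list (a :: l) m = a m || union_list l m.
Proof. reflexivity. Qed.

Lemma union_in l m : union_list l m = true <-> exists a, In a l /\ a m = true.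
Proof. unfold union_list. rewrite existsb_exists. reflexivity. Qed.

Lemma finite_union (x : cantor) l :
  (forall a, In a l -> finite_set (fun m => x m && a m)) ->
  finite_set (fun m => x m && union_list l m).
Proof.
  induction l as [|a l IH]; intros H.
  - exists 0. intros m hm. rewrite andb_false_r in hm. discriminate.
  - apply (finite_sub _ _ (finite_or _ _ (H a (or_introl eq_refl)) (IH (fun b hb => H b (or_intror hb))))).
    intros m hm. rewrite union_cons in hm. destruct (x m), (a m), (union_list l m); auto.
Qed.

Lemma infinite_big x : infinite_set x -> forall N, exists m, N <= m /\ x m = true.
Proof.
  intros H N. apply NNPP. intros h. apply H. exists N. intros m hm.
  destruct (Nat.lt_ge_cases m N); auto. exfalso; apply h; eauto.
Qed.

Lemma notideal_inf A x : ~ ideal_gen A x -> infinite_set x.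
Proof.
  intros H [N HN]. apply H. exists []. split; [intros a []|].
  exists N. intros m hm. apply HN. simpl in hm. rewrite andb_true_r in hm. auto.
Qed.

Lemma last_cons_gen (a : nat) r d : last (a :: r) d = last r a.
Proof.
  revert a d; induction r as [|b r IH]; intros a d; [reflexivity|].
  change (last (b :: r) d = last (b :: r) a). rewrite (IH b d), (IH b a). reflexivity.
Qed.

Section Chain.
Variable xs : nat -> cantor.
Hypothesis Hdec : forall n m, xs (S n) m = true -> xs n m = true.

Lemma mono n n' m : n <= n' -> xs n' m = true -> xs n m = true.
Proof. induction 1; auto. Qed.

Lemma valid_gt k t m : valid xs k t = true -> In m t -> k < m.
Proof.
  revert k; induction t as [|a t IH]; intros k hv hm; [destruct hm|].
  simpl in hv. rewrite !andb_true_iff, Nat.ltb_lt in hv. destruct hv as [[h1 h2] h3].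
  destruct hm as [<-|hm]; auto. specialize (IH a h3 hm). lia.
Qed.

Lemma valid_head k t m : valid xs k t = true -> In m t -> xs k m = true.
Proof.
  revert k; induction t as [|a t IH]; intros k hv hm; [destruct hm|].
  simpl in hv. rewrite !andb_true_iff, Nat.ltb_lt in hv. destruct hv as [[h1 h2] h3].
  destruct hm as [<-|hm]; auto. apply (mono k a); [lia|]. apply IH; auto.
Qed.

Lemma valid_chain k t n m : valid xs k t = true -> In n t -> In m t -> n < m -> xs n m = true.
Proof.
  revert k; induction t as [|a t IH]; intros k hv hn hm hnm; [destruct hn|].
  simpl in hv. rewrite !andb_true_iff, Nat.ltb_lt in hv. destruct hv as [[h1 h2] h3].
  destruct hn as [<-|hn].
  - destruct hm as [<-|hm]; [lia|]. apply (valid_head a t); auto.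
  - destruct hm as [<-|hm].
    + pose proof (valid_gt _ _ _ h3 hn). lia.
    + apply (IH a); auto.
Qed.

Lemma valid_app k t u : valid xs k (t ++ u) = valid xs k t && valid xs (last t k) u.
Proof.
  revert k; induction t as [|a t IH]; intros k; [reflexivity|].
  simpl app. rewrite last_cons_gen. simpl. rewrite IH. rewrite !andb_assoc. reflexivity.
Qed.

Lemma valid_le k t : valid xs k t = true -> k <= last t k.
Proof.
  revert k; induction t as [|a t IH]; intros k hv; [simpl; lia|].
  simpl in hv. rewrite !andb_true_iff, Nat.ltb_lt in hv. destruct hv as [[h1 h2] h3].
  rewrite last_cons_gen. specialize (IH a h3). lia.
Qed.

Lemma valid_lt k t : valid xs k t = true -> t <> [] -> k < last t k.
Proof.
  destruct t as [|a t]; intros hv hne; [congruence|].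
  simpl in hv. rewrite !andb_true_iff, Nat.ltb_lt in hv. destruct hv as [[h1 h2] h3].
  rewrite last_cons_gen. pose proof (valid_le a t h3). lia.
Qed.

Lemma valid_map (f : nat -> nat) :
  (forall i, f i < f (S i) /\ xs (f i) (f (S i)) = true) ->
  forall n i, valid xs (f i) (map f (seq (S i) n)) = true.
Proof.
  intros Hf n; induction n as [|n IH]; intros i; [reflexivity|].
  simpl. destruct (Hf i) as [h1 h2]. rewrite h2, IH.
  apply Nat.ltb_lt in h1. rewrite h1. reflexivity.
Qed.
End Chain.
Section Compact.
Variable A : cantor -> Prop.
Hypothesis HA : closed_cantor A.
Variable j : nat.
Variable f : nat -> nat.
Hypothesis jpos : 0 < j.
Definition Kc (G : nat -> cantor) := forall i, i < j -> A (G i).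
Definition Qc p (G : nat -> cantor) := forall i0, i0 < p -> exists i, i < j /\ G i (f i0) = true.
Definition agree (G : nat -> cantor) (s : list bool) :=
  forall q, q < length s -> G (q mod j) (q / j) = nth q s false.
Definition good s := forall p, exists G, Kc G /\ Qc p G /\ agree G s.

Lemma Qc_mono p p' G : Qc p' G -> p <= p' -> Qc p G.
Proof. intros H h i0 hi. apply H. lia. Qed.

Lemma agree_app G s b : agree G s -> G (length s mod j) (length s / j) = b -> agree G (s ++ [b]).
Proof.
  intros H1 H2 q hq. rewrite length_app in hq; simpl in hq.
  destruct (Nat.lt_ge_cases q (length s)) as [h|h].
  - rewrite app_nth1; auto.
  - assert (q = length s) by lia. subst q. rewrite app_nth2; [|lia].
    rewrite Nat.sub_diag. auto.
Qed.

Lemma agree_init G s b : agree G (s ++ [b]) -> agree G s.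
Proof.
  intros H q hq. rewrite H; [|rewrite length_app; simpl; lia]. rewrite app_nth1; auto.
Qed.

Lemma good_step s : good s -> good (s ++ [true]) \/ good (s ++ [false]).
Proof.
  intros Hs. destruct (classic (good (s ++ [true]))) as [h|h]; [left; auto|right].
  apply not_all_ex_not in h. destruct h as [p1 hp1].
  intros p. destruct (Hs (Nat.max p p1)) as [G [hK [hQ hA]]].
  destruct (G (length s mod j) (length s / j)) eqn:E.
  - exfalso. apply hp1. exists G. split; auto. split.
    + apply (Qc_mono _ _ _ hQ). lia.
    + apply agree_app; auto.
  - exists G. split; auto. split.
    + apply (Qc_mono _ _ _ hQ). lia.
    + apply agree_app; auto.
Qed.

Fixpoint pre q := match q with 0 => [] | S q' => pre q' ++ [bP (good (pre q' ++ [true]))] end.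

Lemma pre_len q : length (pre q) = q.
Proof. induction q; simpl; auto. rewrite length_app, IHq; simpl; lia. Qed.

Lemma pre_good q : good [] -> good (pre q).
Proof.
  intros H0. induction q as [|q IH]; simpl; auto.
  unfold bP. destruct (excluded_middle_informative (good (pre q ++ [true]))) as [h|h]; auto.
  destruct (good_step _ IH); tauto.
Qed.

Lemma pre_prefix q d : nth q (pre (S q + d)) false = nth q (pre (S q)) false.
Proof.
  induction d as [|d IH]; [rewrite Nat.add_0_r; auto|].
  rewrite Nat.add_succ_r.
  change (pre (S (S q + d))) with (pre (S q + d) ++ [bP (good (pre (S q + d) ++ [true]))]).
  rewrite app_nth1.
  - rewrite <- IH. reflexivity.
  - rewrite pre_len. lia.
Qed.

Definition Gs i m := nth (m * j + i) (pre (S (m * j + i))) false.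

Lemma agree_Gs q G : agree G (pre q) -> forall i m, i < j -> m * j + i < q -> G i m = Gs i m.
Proof.
  intros H i m hi hq. specialize (H (m * j + i)). rewrite pre_len in H.
  specialize (H hq).
  assert (E1 : (m * j + i) mod j = i). { symmetry. apply (Nat.mod_unique _ _ m); lia. }
  assert (E2 : (m * j + i) / j = m). { symmetry. apply (Nat.div_unique _ _ _ i); lia. }
  rewrite E1, E2 in H. rewrite H. unfold Gs.
  replace q with (S (m * j + i) + (q - S (m * j + i))) by lia.
  apply pre_prefix.
Qed.

Lemma compact_main : good [] -> exists G, Kc G /\ forall p, Qc p G.
Proof.
  intros H0. exists Gs. split.
  - intros i hi. apply NNPP. intros hA.
    destruct (HA _ hA) as [n hn].
    destruct (pre_good (n * j + j) H0 0) as [G [hK [_ hag]]].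
    apply (hn (G i)); [|apply hK; auto].
    intros i' hi'. apply (agree_Gs _ _ hag); auto. nia.
  - intros p i0 hi0.
    destruct (pre_good (f i0 * j + j) H0 p) as [G [hK [hQ hag]]].
    destruct (hQ i0 hi0) as [i [hi hG]]. exists i. split; auto.
    rewrite <- (agree_Gs _ _ hag); auto. lia.
Qed.
End Compact.

Lemma compact_cover A (HA : closed_cantor A) j f :
  (forall p, exists G, (forall i, i < j -> A (G i)) /\
     forall i0, i0 < p -> exists i, i < j /\ G i (f i0) = true) ->
  exists G, (forall i, i < j -> A (G i)) /\ forall i0, exists i, i < j /\ G i (f i0) = true.
Proof.
  intros H. destruct j as [|j'].
  - destruct (H 1) as [G [_ hG]]. destruct (hG 0) as [i [hi _]]; lia.
  - destruct (compact_main A HA (S j') f ltac:(lia)) as [G [hK hQ]].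
    + intros p. destruct (H p) as [G [h1 h2]]. exists G. split; auto. split; auto.
      intros q hq; simpl in hq; lia.
    + exists G. split; auto. intros i0. apply (hQ (S i0)). lia.
Qed.
Fixpoint buildf (f0 : nat) (step : nat -> nat -> nat) (i : nat) : nat :=
  match i with 0 => f0 | S i' => step i' (buildf f0 step i') end.

Definition pickm (P : nat -> Prop) : nat := epsilon (inhabits 0) P.

Definition rng (f : nat -> nat) : cantor := fun m => bP (exists i, f i = m).

Fixpoint blist (ch : list cantor -> cantor) (n : nat) : list cantor :=
  match n with 0 => [] | S n' => ch (blist ch n') :: blist ch n' end.

Lemma last_app_gen (t u : list nat) d : last (t ++ u) d = last u (last t d).
Proof.
  revert d; induction t as [|a t IH]; intros d; [reflexivity|].
  simpl app. rewrite !last_cons_gen. apply IH.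
Qed.

Section Main.
Variable A : cantor -> Prop.
Hypothesis HAD : almost_disjoint A.
Hypothesis HA : closed_cantor A.
Variable xs : nat -> cantor.
Hypothesis Hdec : forall n m, xs (S n) m = true -> xs n m = true.
Hypothesis Hni : forall n, ~ ideal_gen A (xs n).

Definition chainfrom (ys : nat -> cantor) k (f : nat -> nat) :=
  k < f 0 /\ ys k (f 0) = true /\ forall i, f i < f (S i) /\ ys (f i) (f (S i)) = true.

Lemma chain_ge ys k f : chainfrom ys k f -> forall i, i <= f i.
Proof.
  intros [_ [_ H]] i; induction i as [|i IH]; [lia|]. specialize (H i). lia.
Qed.

Lemma chain_mono ys k f : chainfrom ys k f -> forall i i', i <= i' -> f i <= f i'.
Proof.
  intros [_ [_ H]] i i' h; induction h; [lia|]. specialize (H m). lia.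
Qed.

Lemma rng_inf f ys k : chainfrom ys k f -> forall M, rng f (f M) = true /\ M <= f M.
Proof.
  intros hc M. split; [apply bP_true; eauto|]. apply (chain_ge _ _ _ hc).
Qed.

Lemma big_above (y : cantor) n : infinite_set y -> exists m, n < m /\ y m = true.
Proof. intros H. destruct (infinite_big _ H (S n)) as [m [h1 h2]]. exists m; split; auto; lia. Qed.

Definition Bset (b : cantor) := A b /\ forall n, infinite_set (fun m => b m && xs n m).

Lemma case1 k :
  (forall l, (forall a, In a l -> A a) -> exists b, Bset b /\ ~ In b l) ->
  exists f, chainfrom xs k f /\ ~ ideal_gen A (rng f).
Proof.
  intros C1.
  set (ch := fun l => epsilon (inhabits (fun _ : nat => false)) (fun b => Bset b /\ ~ In b l)).
  assert (bl_A : forall n a, In a (blist ch n) -> A a).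
  { induction n as [|n IH]; intros a ha; [destruct ha|].
    destruct ha as [<-|ha]; auto.
    destruct (epsilon_spec (inhabits (fun _ : nat => false)) (fun b => Bset b /\ ~ In b (blist ch n))
       (C1 _ IH)) as [[hb _] _]. exact hb. }
  assert (ch_spec : forall n, Bset (ch (blist ch n)) /\ ~ In (ch (blist ch n)) (blist ch n)).
  { intros n. apply (epsilon_spec (inhabits (fun _ : nat => false)) (fun b => Bset b /\ ~ In b (blist ch n))).
    apply C1, bl_A. }
  set (bs := fun v => ch (blist ch v)).
  assert (bs_in : forall u v, u < v -> In (bs u) (blist ch v)).
  { intros u v h; induction h; simpl; auto. }
  assert (bs_inj : forall u v, bs u = bs v -> u = v).
  { intros u v e. destruct (Nat.lt_trichotomy u v) as [h|[h|h]]; auto.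
    - exfalso. apply (proj2 (ch_spec v)). fold (bs v). rewrite <- e. auto.
    - exfalso. apply (proj2 (ch_spec u)). fold (bs u). rewrite e. auto. }
  set (P0 := fun m => k < m /\ xs k m = true).
  set (Ps := fun i n m => n < m /\ xs n m = true /\ bs (fst (Cantor.of_nat i)) m = true).
  set (f := buildf (pickm P0) (fun i n => pickm (Ps i n))).
  assert (h0 : P0 (f 0)).
  { change (P0 (epsilon (inhabits 0) P0)). apply epsilon_spec. apply big_above. apply (notideal_inf A), Hni. }
  assert (hS : forall i, Ps i (f i) (f (S i))).
  { intros i. change (Ps i (f i) (epsilon (inhabits 0) (Ps i (f i)))). apply epsilon_spec. destruct (ch_spec (fst (Cantor.of_nat i))) as [[_ hB] _].
    destruct (big_above _ (f i) (hB (f i))) as [m [h1 h2]].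
    apply andb_true_iff in h2. exists m. unfold Ps. tauto. }
  assert (hc : chainfrom xs k f).
  { destruct h0 as [h01 h02]. split; auto. split; auto. intros i. destruct (hS i) as [a [b _]]; auto. }
  exists f. split; auto.
  intros [l [hl [N hN]]].
  (* pigeonhole *)
  assert (hv : exists v, ~ In (bs v) l).
  { apply NNPP. intros hn.
    assert (hinc : incl (map bs (seq 0 (S (length l)))) l).
    { intros a ha. apply in_map_iff in ha. destruct ha as [v [<- _]].
      apply NNPP. intros h; apply hn; exists v; exact h. }
    apply NoDup_incl_length in hinc.
    - rewrite length_map, length_seq in hinc. unfold cantor in *; lia.
    - apply FinFun.Injective_map_NoDup; [exact bs_inj|apply seq_NoDup]. }
  destruct hv as [v hv].
  assert (hfin : finite_set (fun m => bs v m && union_list l m)).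
  { apply finite_union. intros a ha.
    destruct HAD as [_ had].
    assert (hne : bs v <> a) by (intros e; apply hv; rewrite e; auto).
    apply (had _ _ (proj1 (proj1 (ch_spec v))) (hl a ha) hne). }
  destruct hfin as [N2 hN2].
  set (i := Cantor.to_nat (v, N + N2)).
  assert (hi : fst (Cantor.of_nat i) = v) by (unfold i; rewrite Cantor.cancel_of_to; auto).
  destruct (hS i) as [_ [_ hb]]. rewrite hi in hb.
  assert (hge : S i <= f (S i)) by apply (chain_ge _ _ _ hc).
  assert (hi2 : N + N2 + v <= i) by (unfold i; pose proof (Cantor.to_nat_non_decreasing v (N + N2)); lia).
  assert (hr : rng f (f (S i)) = true) by (apply bP_true; eauto).
  destruct (union_list l (f (S i))) eqn:E.
  - assert (f (S i) < N2) by (apply hN2; rewrite hb, E; auto). lia.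
  - assert (f (S i) < N) by (apply hN; rewrite hr, E; auto). lia.
Qed.

Lemma case2 k (l : list cantor) :
  (forall a, In a l -> A a) -> (forall b, Bset b -> In b l) ->
  exists f, chainfrom xs k f /\ ~ ideal_gen A (rng f).
Proof.
  intros hl hB.
  set (y := fun n m => xs n m && negb (union_list l m)).
  assert (ydec : forall n n' m, n <= n' -> y n' m = true -> y n m = true).
  { intros n n' m h hy. unfold y in *. apply andb_true_iff in hy. destruct hy as [h1 h2].
    rewrite (mono xs Hdec n n' m h h1). auto. }
  assert (yni : forall n, ~ ideal_gen A (y n)).
  { intros n [l' [hl' [N hN]]]. apply (Hni n). exists (l ++ l'). split.
    - intros a ha. apply in_app_or in ha. destruct ha; auto.
    - exists N. intros m hm. apply hN. unfold y.
      assert (E : union_list (l ++ l') m = union_list l m || union_list l' m)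
        by (unfold union_list; apply existsb_app).
      rewrite E in hm. destruct (xs n m), (union_list l m), (union_list l' m);
        simpl in *; try discriminate; auto. }
  assert (yad : forall a, A a -> exists n, finite_set (fun m => a m && y n m)).
  { intros a ha. destruct (classic (In a l)) as [hin|hnin].
    - exists 0. exists 0. intros m hm. apply andb_true_iff in hm. destruct hm as [h1 h2].
      unfold y in h2. assert (union_list l m = true) by (apply union_in; eauto).
      rewrite H in h2. rewrite andb_false_r in h2. discriminate.
    - assert (hnb : ~ Bset a) by (intros hb; apply hnin, hB, hb).
      assert (hn : exists n, ~ infinite_set (fun m => a m && xs n m)).
      { apply NNPP. intros h. apply hnb. split; auto. intros n. apply NNPP. intros h'. apply h; eauto. }
      destruct hn as [n hn]. exists n. apply NNPP in hn.
      apply (finite_sub _ _ hn). intros m hm. unfold y in hm.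
      destruct (a m), (xs n m); auto. }
  set (P0 := fun m => k < m /\ y k m = true).
  set (Ps := fun n m => n < m /\ y n m = true).
  set (f := buildf (pickm P0) (fun _ n => pickm (Ps n))).
  assert (h0 : P0 (f 0)).
  { change (P0 (epsilon (inhabits 0) P0)). apply epsilon_spec. apply big_above. apply (notideal_inf A), yni. }
  assert (hS : forall i, Ps (f i) (f (S i))).
  { intros i. change (Ps (f i) (epsilon (inhabits 0) (Ps (f i)))). apply epsilon_spec. apply big_above. apply (notideal_inf A), yni. }
  assert (hcy : chainfrom y k f).
  { destruct h0 as [h01 h02]. split; auto. }
  assert (hc : chainfrom xs k f).
  { destruct h0 as [h01 h02]. split; auto. split.
    - unfold y in h02. apply andb_true_iff in h02; tauto.
    - intros i. destruct (hS i) as [a b]. unfold y in b. apply andb_true_iff in b. tauto. }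
  exists f. split; auto.
  assert (hfa : forall a, A a -> finite_set (fun m => rng f m && a m)).
  { intros a ha. destruct (yad a ha) as [n [N hN]].
    exists (Nat.max N (S (f n))). intros m hm. apply andb_true_iff in hm. destruct hm as [hr ham].
    unfold rng in hr; apply (proj1 (bP_true _)) in hr. destruct hr as [i <-].
    destruct (Nat.le_gt_cases i n) as [h|h].
    - pose proof (chain_mono _ _ _ hc i n h). lia.
    - destruct i as [|i']; [lia|].
      assert (f (S i') < N); [|lia].
      apply hN. rewrite ham. simpl.
      apply (ydec n (f i')); [pose proof (chain_ge _ _ _ hc i'); lia|].
      apply (hS i'). }
  intros [l' [hl' [N hN]]].
  destruct (finite_union (rng f) l' (fun a h => hfa a (hl' a h))) as [N2 hN2].
  destruct (rng_inf f _ _ hc (N + N2)) as [hr hge].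
  destruct (union_list l' (f (N + N2))) eqn:E.
  - assert (f (N + N2) < N2) by (apply hN2; rewrite hr, E; auto). lia.
  - assert (f (N + N2) < N) by (apply hN; rewrite hr, E; auto). lia.
Qed.

Lemma exists_chain k : exists f, chainfrom xs k f /\ ~ ideal_gen A (rng f).
Proof.
  destruct (classic (forall l, (forall a, In a l -> A a) -> exists b, Bset b /\ ~ In b l)) as [C|C].
  - apply case1; auto.
  - apply not_all_ex_not in C. destruct C as [l hl].
    apply (case2 k l).
    + intros a ha. apply NNPP. intros h. apply hl. intros h'. exfalso; auto.
    + intros b hb. apply NNPP. intros h. apply hl. intros _. eauto.
Qed.
End Main.
Section Final.
Variable A : cantor -> Prop.
Hypothesis HAD : almost_disjoint A.
Hypothesis HA : closed_cantor A.
Variable xs : nat -> cantor.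
Hypothesis Hdec : forall n m, xs (S n) m = true -> xs n m = true.
Hypothesis Hni : forall n, ~ ideal_gen A (xs n).

Lemma exist_block j k : exists t, valid xs k t = true /\ Req A j t.
Proof.
  destruct (exists_chain A HAD xs Hdec Hni k) as [f [hc hni]].
  assert (hp : exists p, forall G, (forall i, i < j -> A (G i)) ->
             exists i0, i0 < p /\ forall i, i < j -> G i (f i0) = false).
  { apply NNPP. intros hn.
    assert (hcov : forall p, exists G, (forall i, i < j -> A (G i)) /\
              forall i0, i0 < p -> exists i, i < j /\ G i (f i0) = true).
    { intros p. apply NNPP. intros h1. apply hn. exists p. intros G hG.
      apply NNPP. intros h2. apply h1. exists G. split; auto.
      intros i0 hi0. apply NNPP. intros h3. apply h2. exists i0. split; auto.
      intros i hi. destruct (G i (f i0)) eqn:E; auto. exfalso; apply h3; eauto. }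
    destruct (compact_cover A HA j f hcov) as [G [hG hall]].
    apply hni. exists (map G (seq 0 j)). split.
    - intros a ha. apply in_map_iff in ha. destruct ha as [i [<- hi]].
      apply in_seq in hi. apply hG. lia.
    - exists 0. intros m hm. exfalso. apply andb_true_iff in hm. destruct hm as [hr hu].
      unfold rng in hr. apply (proj1 (bP_true _)) in hr. destruct hr as [i0 <-].
      destruct (hall i0) as [i [hi hGi]].
      assert (union_list (map G (seq 0 j)) (f i0) = true).
      { apply union_in. exists (G i). split; auto. apply in_map. apply in_seq. lia. }
      rewrite H in hu. discriminate. }
  destruct hp as [p hp].
  exists (map f (seq 0 (S p))). split.
  - destruct hc as [h1 [h2 h3]]. simpl. rewrite h2.
    apply Nat.ltb_lt in h1. rewrite h1. simpl. apply (valid_map xs f h3 p 0).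
  - split; [simpl; discriminate|].
    intros G hG. destruct (hp G hG) as [i0 [hi0 hz]]. exists (f i0). split; auto.
    apply in_map. apply in_seq. lia.
Qed.

Lemma blk_ok j : valid xs (st A xs j) (blk A xs j) = true /\ Req A j (blk A xs j).
Proof.
  destruct (exist_block j (st A xs j)) as [t [h1 h2]].
  assert (hP : exists e, Pb A xs j (st A xs j) e = true).
  { exists (enc t). unfold Pb. rewrite dec_enc, h1. simpl. apply bP_true. auto. }
  destruct (next_spec _ _ _ _ hP) as [hP' _].
  unfold Pb in hP'. apply andb_true_iff in hP'. destruct hP' as [a b].
  unfold blk. split; auto. apply (proj1 (bP_true _)) in b. auto.
Qed.

Lemma st_S j : st A xs (S j) = last (blk A xs j) (st A xs j).
Proof. reflexivity. Qed.

Lemma st_ge j : j <= st A xs j.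
Proof.
  induction j as [|j IH]; [simpl; lia|]. rewrite st_S.
  destruct (blk_ok j) as [h1 [h2 _]].
  pose proof (valid_lt xs (st A xs j) _ h1 h2). lia.
Qed.

Fixpoint Lst j := match j with 0 => [] | S j' => Lst j' ++ blk A xs j' end.

Lemma L_ok j : valid xs 0 (Lst j) = true /\ last (Lst j) 0 = st A xs j.
Proof.
  induction j as [|j [IH1 IH2]]; [split; reflexivity|].
  simpl Lst. rewrite valid_app, last_app_gen, IH1, IH2, st_S.
  destruct (blk_ok j) as [h _]. rewrite h. auto.
Qed.

Lemma L_mono j j' m : In m (Lst j) -> j <= j' -> In m (Lst j').
Proof. intros h hj; induction hj; auto. simpl. apply in_or_app; auto. Qed.

Lemma Hf_in m : Hf A xs m = true -> exists j, In m (Lst j).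
Proof.
  intros h. unfold Hf in h. apply (proj1 (bP_true _)) in h. destruct h as [j hj].
  exists (S j). simpl. apply in_or_app; auto.
Qed.

Lemma Hf_chain n : Hf A xs n = true -> forall m, n < m -> Hf A xs m = true -> xs n m = true.
Proof.
  intros hn m hnm hm. destruct (Hf_in n hn) as [j1 h1]. destruct (Hf_in m hm) as [j2 h2].
  apply (valid_chain xs Hdec 0 (Lst (Nat.max j1 j2))); auto.
  - apply L_ok.
  - apply (L_mono j1); auto; lia.
  - apply (L_mono j2); auto; lia.
Qed.

Lemma Hf_notideal : ~ ideal_gen A (Hf A xs).
Proof.
  intros [l [hl [N hN]]].
  destruct l as [|a0 l0] eqn:El.
  - destruct (blk_ok N) as [hv [hne _]].
    destruct (blk A xs N) as [|m t] eqn:Eb; [congruence|].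
    assert (hm : In m (blk A xs N)) by (rewrite Eb; left; auto).
    assert (Hf A xs m = true) by (apply bP_true; eauto).
    assert (m < N) by (apply hN; rewrite H; auto).
    pose proof (valid_gt xs _ _ _ hv (or_introl eq_refl)). pose proof (st_ge N). lia.
  - rewrite <- El in hl, hN. set (J := Nat.max (length l) N).
    destruct (blk_ok J) as [hv [_ hnc]].
    destruct (hnc (fun i => nth i l a0)) as [m [hm hz]].
    + intros i hi. destruct (Nat.lt_ge_cases i (length l)).
      * apply hl. apply nth_In; auto.
      * rewrite nth_overflow; auto. apply hl. rewrite El; left; auto.
    + assert (Hf A xs m = true) by (apply bP_true; eauto).
      assert (hu : union_list l m = false).
      { destruct (union_list l m) eqn:E; auto. apply union_in in E.
        destruct E as [a [ha ham]]. destruct (In_nth _ _ a0 ha) as [i [hi hia]].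
        rewrite <- hia in ham. rewrite (hz i) in ham; [discriminate|unfold J; lia]. }
      assert (m < N) by (apply hN; rewrite H, hu; auto).
      pose proof (valid_gt xs _ _ _ hv hm). pose proof (st_ge J). unfold J in *. lia.
Qed.
End Final.

Theorem mainTheorem11 (A : cantor -> Prop) :
  almost_disjoint A -> closed_cantor A ->
  uniformly_selective (ideal_gen A).
Proof.
  intros HAD HA. exists (Hf A). split; [apply Hf_borel|].
  intros xs Hdec Hni. split.
  - apply Hf_notideal; auto.
  - intros n hn m hnm hm. apply (Hf_chain A HAD HA xs Hdec Hni n hn m hnm hm).
Qed.
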